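(* Let $A\subseteq\mathbb{R}$ be nonempty and $a\in A$. For each $k\in\mathbb{N}$ let $f_k:A\to\mathbb{R}$ be weakly symmetrically continuous at $a$, and suppose $(f_k)$ converges uniformly on $A$ to a function $f:A\to\mathbb{R}$. Then $f$ is weakly symmetrically continuous at $a$.
   Context: $S_a(A)$ is the set of all sequences $(h_n)$ of positive reals converging to $0$ with $a+h_n,a-h_n\in A$ for every $n$; a function $f:A\to\mathbb{R}$ is weakly symmetrically continuous at $a$ if, whenever $S_a(A)\neq\emptyset$, there exists $(h_n)\in S_a(A)$ with $\lim_{n\to\infty}\big(f(a+h_n)-f(a-h_n)\big)=0$. *)

(* Defs.v *)
From Stdlib Require Import Reals.
Open Scope R_scope.

(* A subset of R is a predicate; a function A -> R is represented by a total
   function R -> R whose values outside A are irrelevant. *)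

Definition in_S (A : R -> Prop) (a : R) (h : nat -> R) : Prop :=
  (forall n, 0 < h n) /\ Un_cv h 0 /\
  (forall n, A (a + h n) /\ A (a - h n)).

Definition S_nonempty (A : R -> Prop) (a : R) : Prop :=
  exists h, in_S A a h.

Definition weakly_sym_cont (A : R -> Prop) (f : R -> R) (a : R) : Prop :=
  S_nonempty A a ->
  exists h, in_S A a h /\ Un_cv (fun n => f (a + h n) - f (a - h n)) 0.

Definition unif_cv_on (A : R -> Prop) (fk : nat -> R -> R) (f : R -> R) : Prop :=
  forall eps, 0 < eps -> exists N : nat, forall k x, (N <= k)%nat -> A x ->
    Rabs (fk k x - f x) < eps.

(* Main.v *)
Require Import Defs.
From Stdlib Require Import Reals Lra Lia ClassicalEpsilon.
Open Scope R_scope.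

Lemma choice_nat {B : Type} (P : nat -> B -> Prop) :
  (forall k, exists b, P k b) -> exists g, forall k, P k (g k).
Proof.
  intros H. exists (fun k => proj1_sig (constructive_indefinite_description _ (H k))).
  intros k. exact (proj2_sig (constructive_indefinite_description _ (H k))).
Qed.

Lemma small_inv (eps : R) : 0 < eps -> exists N : nat, forall n, (N <= n)%nat -> / (INR n + 1) < eps.
Proof.
  intros He. destruct (archimed_cor1 eps He) as [N [HN HN0]].
  exists N. intros n Hn.
  assert (HNn : INR N <= INR n) by (apply le_INR; lia).
  assert (0 < INR N) by (apply lt_0_INR; lia).
  apply Rle_lt_trans with (/ INR N); [|exact HN].
  apply Rinv_le_contravar; lra.
Qed.

Theorem theorem4p2 (A : R -> Prop) (a : R) (fk : nat -> R -> R) (f : R -> R) :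
  (exists x, A x) -> A a ->
  (forall k, weakly_sym_cont A (fk k) a) ->
  unif_cv_on A fk f ->
  weakly_sym_cont A f a.
Proof.
  intros _ _ Hw Hu Hne.
  assert (Hk : forall k : nat, exists x : R,
    (0 < x /\ x < / (INR k + 1)) /\ (A (a + x) /\ A (a - x)) /\
    Rabs (f (a + x) - f (a - x)) < 3 * / (INR k + 1)).
  { intros k.
    set (e := / (INR k + 1)).
    assert (He : 0 < e) by (unfold e; apply Rinv_0_lt_compat; pose proof (pos_INR k); lra).
    destruct (Hu e He) as [N HN].
    destruct (Hw N Hne) as [h [[Hpos [Hcv HA]] Hd]].
    destruct (Hcv e He) as [n1 Hn1].
    destruct (Hd e He) as [n2 Hn2].
    set (n := Nat.max n1 n2).
    specialize (Hn1 n ltac:(unfold n; lia)). specialize (Hn2 n ltac:(unfold n; lia)).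
    unfold R_dist in *. rewrite Rminus_0_r in Hn1, Hn2.
    exists (h n). specialize (Hpos n). destruct (HA n) as [Ha1 Ha2].
    rewrite Rabs_right in Hn1 by lra.
    split; [split; [lra|exact Hn1]|split;[split; assumption|]].
    pose proof (HN N (a + h n) (le_n N) Ha1) as E1.
    pose proof (HN N (a - h n) (le_n N) Ha2) as E2.
    revert E1 E2 Hn2. unfold Rabs. repeat destruct Rcase_abs; intros; lra. }
  destruct (choice_nat _ Hk) as [h Hh].
  exists h. split; [split; [|split]|].
  - intros n. destruct (Hh n) as [[? ?] _]. assumption.
  - intros eps Heps. destruct (small_inv eps Heps) as [N HN].
    exists N. intros n Hn. unfold R_dist. rewrite Rminus_0_r.
    destruct (Hh n) as [[H1 H2] _]. specialize (HN n Hn).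
    rewrite Rabs_right by lra. lra.
  - intros n. destruct (Hh n) as [_ [? _]]. assumption.
  - intros eps Heps. destruct (small_inv (eps/3) ltac:(lra)) as [N HN].
    exists N. intros n Hn. unfold R_dist. rewrite Rminus_0_r.
    destruct (Hh n) as [_ [_ H3]]. specialize (HN n Hn). lra.
Qed.
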